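(* Let $m,n$ be positive integers and $(A,\boldsymbol{\gamma})\in[0,1)^{m\times n}\times[0,1)^m$. If $\langle A\boldsymbol{q}-\boldsymbol{\gamma}\rangle>0$ for every $\boldsymbol{q}\in\mathbb{Z}^n\setminus\{\boldsymbol{0}\}$, then either $S_l(A,\boldsymbol{\gamma})<\infty$ for all $l\in\mathbb{N}$, or $S_l(A,\boldsymbol{\gamma})=\infty$ for all $l\in\mathbb{N}$.
   Context: $[0,1)^{m\times n}$ is the set of real $m\times n$ matrices with entries in $[0,1)$. For $\boldsymbol{x}\in\mathbb{R}^n$, $\|\boldsymbol{x}\|=\max_i|x_i|$; for $\boldsymbol{y}\in\mathbb{R}^m$, $\langle\boldsymbol{y}\rangle=\min_{\boldsymbol{p}\in\mathbb{Z}^m}\|\boldsymbol{y}-\boldsymbol{p}\|$. For $l\in\mathbb{N}$, $S_l(A,\boldsymbol{\gamma})=\sum_{t=l}^\infty t^{n-1}\min_{\boldsymbol{q}\in\mathbb{Z}^n,\ l\le\|\boldsymbol{q}\|\le t}\langle A\boldsymbol{q}-\boldsymbol{\gamma}\rangle^m$. *)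

(* Defs.v *)
From HB Require Import structures.
From mathcomp Require Import all_boot all_order all_algebra.
From mathcomp Require Import all_classical all_reals all_analysis.
Set Implicit Arguments. Unset Strict Implicit. Unset Printing Implicit Defensive.
Import Order.TTheory GRing.Theory Num.Theory.
Local Open Scope classical_set_scope.
Local Open Scope ring_scope.

Definition supnorm (n : nat) (q : 'cV[int]_n) : nat := \max_(i < n) `|q i ord0|%N.

Definition rsupnorm {R : realType} (m : nat) (y : 'cV[R]_m) : R :=
  \big[Num.max/0]_(i < m) `|y i ord0|.

(* <y> = min_{p in Z^m} ||y - p||  (the minimum exists; written as inf) *)
Definition distZ {R : realType} (m : nat) (y : 'cV[R]_m) : R :=
  inf [set rsupnorm (y - map_mx (fun z : int => z%:~R) p) | p in [set: 'cV[int]_m]].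

Definition affine_val {R : realType} (m n : nat) (A : 'M[R]_(m, n)) (gamma : 'cV[R]_m)
  (q : 'cV[int]_n) : 'cV[R]_m :=
  A *m map_mx (fun z : int => z%:~R) q - gamma.

Definition S_term {R : realType} (m n : nat) (A : 'M[R]_(m, n)) (gamma : 'cV[R]_m)
  (l t : nat) : R :=
  (t%:R ^+ (n - 1)) *
  inf [set distZ (affine_val A gamma q) ^+ m
      | q in [set q : 'cV[int]_n | (l <= supnorm q <= t)%N]].

Definition S_l {R : realType} (m n : nat) (A : 'M[R]_(m, n)) (gamma : 'cV[R]_m)
  (l : nat) : \bar R :=
  (\sum_(l <= t <oo) (S_term A gamma l t)%:E)%E.

(* Main.v *)
Require Import Defs.
From HB Require Import structures.
From mathcomp Require Import all_boot all_order all_algebra.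
From mathcomp Require Import all_classical all_reals all_analysis.
From mathcomp Require Import zify.
Import Order.TTheory GRing.Theory Num.Theory.
Local Open Scope ring_scope.

Section Aux.
Variable R : realType.
Variables m n : nat.
Variable A : 'M[R]_(m, n).
Variable gamma : 'cV[R]_m.

Definition FF (q : 'cV[int]_n) : R := distZ (affine_val A gamma q) ^+ m.
Definition EE (l t : nat) : set R :=
  [set FF q | q in [set q : 'cV[int]_n | (l <= supnorm q <= t)%N]].

Lemma S_termE l t : S_term A gamma l t = t%:R ^+ (n - 1) * inf (EE l t).
Proof. by []. Qed.

Lemma distZ_ge0 (k : nat) (y : 'cV[R]_k) : 0 <= distZ y.
Proof.
rewrite /distZ; apply: lb_le_inf.
  by exists (rsupnorm (y - map_mx (fun z : int => z%:~R) 0)), 0.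
move=> _ [p _ <-]; rewrite /rsupnorm.
by apply: (big_ind (fun x => 0 <= x)) => // x z hx hz; rewrite le_max hx.
Qed.

Lemma FF_ge0 q : 0 <= FF q.
Proof. exact/exprn_ge0/distZ_ge0. Qed.

Lemma EE_lb l t : has_lbound (EE l t).
Proof. by exists 0 => _ [q _ <-]; exact: FF_ge0. Qed.

Lemma infEE_ge0 l t : 0 <= inf (EE l t).
Proof.
have [->|ne] := eqVneq (EE l t) set0; first by rewrite inf0.
apply: lb_le_inf; first exact/set0P.
by move=> _ [q _ <-]; exact: FF_ge0.
Qed.

Lemma infEE_le l t q : (l <= supnorm q <= t)%N -> inf (EE l t) <= FF q.
Proof. by move=> h; apply: ge_inf; [exact: EE_lb | exists q]. Qed.

Lemma supnorm_const k : (0 < n)%N -> supnorm (const_mx (k%:Z) : 'cV[int]_n) = k.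
Proof.
move=> hn; rewrite /supnorm.
under eq_bigr do rewrite mxE.
rewrite big_const_ord; case: n hn => // n' _.
elim: n' => [|n' IH] /=; first by rewrite maxn0.
by rewrite /= in IH; rewrite IH maxnn.
Qed.

Lemma supnorm0 : supnorm (0 : 'cV[int]_n) = 0%N.
Proof. by rewrite /supnorm big1 // => i _; rewrite mxE. Qed.

Lemma infEE_mono l l' t : (0 < n)%N -> (l <= l')%N -> (l' <= t)%N ->
  inf (EE l t) <= inf (EE l' t).
Proof.
move=> hn hll' hl't; apply: lb_le_inf.
  exists (FF (const_mx (l'%:Z))), (const_mx (l'%:Z)) => //=.
  by rewrite supnorm_const // leqnn.
move=> _ [q /= /andP[h1 h2] <-]; apply: infEE_le.
by rewrite (leq_trans hll' h1) h2.
Qed.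

Lemma list_lb (s : seq 'cV[int]_n) :
  (forall q, q != 0 -> 0 < FF q) ->
  exists2 c, 0 < c & forall q, q \in s -> q != 0 -> c <= FF q.
Proof.
move=> hpos; elim: s => [|a s [c c0 hc]]; first by exists 1.
have [a0|an0] := eqVneq a 0.
  exists c => // q; rewrite inE => /orP[/eqP ->|/hc //]; by rewrite a0 eqxx.
exists (Num.min c (FF a)); first by rewrite lt_min c0 hpos.
move=> q; rewrite inE => /orP[/eqP ->|/hc h] qn0.
  by rewrite ge_min lexx orbT.
by rewrite ge_min h.
Qed.

Lemma bound_below (N : nat) :
  (forall q, q != 0 -> 0 < FF q) ->
  exists2 c, 0 < c & forall q, q != 0 -> (supnorm q <= N)%N -> c <= FF q.
Proof.
move=> hpos.
pose g (v : 'cV['I_(2 * N).+1]_n) : 'cV[int]_n :=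
  \matrix_(i, j) ((v i j : nat)%:Z - N%:Z).
have [c c0 hc] := list_lb (map g (enum 'cV['I_(2 * N).+1]_n)) hpos.
exists c => // q qn0 hq; apply: hc => //.
have hi : forall i j, (absz (q i j) <= N)%N.
  move=> i j; rewrite (ord1 j); apply: leq_trans hq.
  exact: (@leq_bigmax _ (fun i => absz (q i ord0)) i).
pose v : 'cV['I_(2 * N).+1]_n := \matrix_(i, j) inord (absz (q i j + N%:Z)%R).
have -> : q = g v.
  apply/matrixP => i j; rewrite !mxE inordK; have := hi i j; lia.
by apply: map_f; rewrite mem_enum.
Qed.


Lemma L2 l : (0 < n)%N -> (0 < l)%N ->
  (forall q, q != 0 -> 0 < FF q) ->
  exists2 K, 0 <= K & forall t, (l <= t)%N -> inf (EE l t) <= K * inf (EE 1 t).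
Proof.
move=> hn hl hpos.
have [q0 hq0] : exists q0 : 'cV[int]_n, supnorm q0 = l.
  by exists (const_mx l%:Z); exact: supnorm_const.
have [c c0 hc] := bound_below l hpos.
have [K [K1 hK]] : exists K, 1 <= K /\ c * K = c + FF q0.
  exists (1 + FF q0 / c); split; first by rewrite lerDl divr_ge0 // ?FF_ge0 // ltW.
  by rewrite mulrDr mulr1 mulrCA divff ?gt_eqF // mulr1.
have K0 : 0 < K by apply: lt_le_trans K1.
exists K; first exact: ltW.
move=> t lt.
have hI : inf (EE l t) <= FF q0 by apply: infEE_le; rewrite hq0 leqnn.
have : inf (EE l t) / K <= inf (EE 1 t).
  apply: lb_le_inf.
    by exists (FF q0), q0 => //; rewrite /= hq0 hl lt.
  move=> _ [q /andP[h1 h2] <-].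
  case: (leqP l (supnorm q)) => hq.
    have hh : inf (EE l t) <= FF q by apply: infEE_le; rewrite hq h2.
    apply: le_trans hh.
    by rewrite ler_pdivrMr // ler_peMr // infEE_ge0.
  have qn0 : q != 0 by apply/eqP => q0'; move: h1; rewrite q0' supnorm0.
  apply: le_trans (hc q qn0 (ltnW hq)).
  rewrite ler_pdivrMr // hK.
  apply: (le_trans hI); by rewrite -{1}[FF q0]add0r lerD2r ltW.
by rewrite ler_pdivrMr // mulrC.
Qed.

Lemma ser_le (f g : nat -> R) N : (forall t, (N <= t)%N -> 0 <= f t) ->
  (forall t, (N <= t)%N -> f t <= g t) ->
  (\sum_(N <= t <oo) (f t)%:E <= \sum_(N <= t <oo) (g t)%:E)%E.
Proof.
move=> f0 fg.
rewrite (eseries_cond (fun t => (f t)%:E)) (eseries_cond (fun t => (g t)%:E)).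
apply: (@lee_nneseries R (fun t => (f t)%:E) (fun t => (g t)%:E) (fun t => true && (N <= t)%N) 0).
  by move=> i _ /= hi; rewrite lee_fin f0.
by move=> i /= hi; rewrite lee_fin fg.
Qed.

Lemma serZ (f : nat -> R) (K : R) N : (forall t, 0 <= f t) ->
  (\sum_(N <= t <oo) (K * f t)%:E = K%:E * \sum_(N <= t <oo) (f t)%:E)%E.
Proof.
move=> f0; rewrite -nneseriesZl; last by move=> i _; rewrite lee_fin.
by apply/congr_lim/funext => k; apply: eq_bigr => i _; rewrite EFinM.
Qed.

Lemma ser_split (f : nat -> R) l : (0 < l)%N -> (forall t, 0 <= f t) ->
  (\sum_(1 <= t <oo) (f t)%:E = (\sum_(1 <= t < l) f t)%:E + \sum_(l <= t <oo) (f t)%:E)%E.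
Proof.
move=> hl f0; rewrite (@nneseries_split _ (fun t => (f t)%:E) 1 l.-1); last by move=> k _; rewrite lee_fin.
by rewrite add1n prednK // sumEFin.
Qed.

Lemma ser_ge0 (f : nat -> R) N : (forall t, 0 <= f t) ->
  (0 <= \sum_(N <= t <oo) (f t)%:E)%E.
Proof. by move=> f0; apply: nneseries_ge0 => k _ _; rewrite lee_fin. Qed.

End Aux.

Theorem lemma2p2 (R : realType) (m n : nat) (hm : (0 < m)%N) (hn : (0 < n)%N)
  (A : 'M[R]_(m, n)) (gamma : 'cV[R]_m)
  (hA : forall i j, 0 <= A i j < 1)
  (hg : forall i, 0 <= gamma i ord0 < 1)
  (hbad : forall q : 'cV[int]_n, q != 0 -> 0 < distZ (affine_val A gamma q)) :
  (forall l : nat, (0 < l)%N -> (S_l A gamma l < +oo)%E) \/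
  (forall l : nat, (0 < l)%N -> S_l A gamma l = +oo%E).
Proof.
have hpos : forall q, q != 0 -> 0 < @FF R m n A gamma q.
  by move=> q /hbad h; rewrite /FF exprn_gt0.
have u0 : forall l t, 0 <= S_term A gamma l t.
  by move=> l t; rewrite S_termE mulr_ge0 ?exprn_ge0 ?infEE_ge0.
have ule : forall l t, (0 < l)%N -> (l <= t)%N -> S_term A gamma 1 t <= S_term A gamma l t.
  move=> l t hl hlt; rewrite !S_termE ler_wpM2l ?exprn_ge0 //.
  exact: infEE_mono.
have [h1|h1] := boolP (S_l A gamma 1 < +oo)%E.
  left => l hl.
  have [K K0 hK] := @L2 R m n A gamma l hn hl hpos.
  apply: (@le_lt_trans _ _ (K%:E * S_l A gamma 1)%E); last first.
    by apply: lte_mul_pinfty => //; rewrite ge0_fin_numE.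
  rewrite /S_l; apply: (@le_trans _ _ (\sum_(l <= t <oo) (K * S_term A gamma 1 t)%:E)%E).
    apply: ser_le => // t lt; rewrite !S_termE mulrCA ler_wpM2l ?exprn_ge0 //.
    exact: hK.
  rewrite serZ //; apply: lee_wpmul2l; first by rewrite lee_fin.
  rewrite (@ser_split R _ l hl) //; rewrite leeDr // lee_fin.
  by apply: sumr_ge0.
right => l hl; apply/eqP; apply/negPn; rewrite -ltey; move: h1; apply: contra => h.
rewrite /S_l (@ser_split R _ l hl) //; apply: lte_add_pinfty; first exact: ltry.
apply: le_lt_trans h; rewrite /S_l; apply: ser_le => // t lt; exact: ule.
Qed.
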